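(* Let $U=\sum_{j=0}^3c_j\sigma_j\otimes\sigma_j$ be a normalized two-qubit unitary with parameters $x,y,z$ and $c_2=c_3$, and write $E(\alpha,\beta):=E(\varphi(\alpha,\beta;\frac{\pi}{2},\frac{\pi}{2}))$. (i) $\max_{\alpha,\beta\in[0,\pi/2]}E(\alpha,\beta)=\max_{\alpha\in[0,\pi/4],\beta\in[0,\pi/2]}E(\alpha,\beta)=\max_{\alpha\in[0,\pi/2],\beta\in[0,\pi/4]}E(\alpha,\beta)$. (ii) Let $B=\{(\alpha,\beta)\in[0,\pi/4]\times[0,\pi/2]:\ \alpha\in\{0,\pi/4\}\text{ or }\beta\in\{0,\pi/4\}\}$. Then $$\max_{(\alpha,\beta)\in B}E(\alpha,\beta)=\begin{cases}\max\{1,E(\tfrac{\pi}{4},\tfrac{\pi}{4})\}, & \cos(2x+2y)\le0,\\ \max\{E(0,\tfrac{\pi}{2}),E(\tfrac{\pi}{4},\tfrac{\pi}{4})\}, & \cos(2x+2y)>0.\end{cases}$$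
   Context: Pauli matrices: $\sigma_0=I$, $\sigma_1=\begin{pmatrix}0&1\\1&0\end{pmatrix}$, $\sigma_2=\begin{pmatrix}0&-i\\i&0\end{pmatrix}$, $\sigma_3=\begin{pmatrix}1&0\\0&-1\end{pmatrix}$. For real $x,y,z$ set $c_0=\cos x\cos y\cos z+i\sin x\sin y\sin z$, $c_1=\cos x\sin y\sin z+i\sin x\cos y\cos z$, $c_2=\sin x\cos y\sin z+i\cos x\sin y\cos z$, $c_3=\sin x\sin y\cos z+i\cos x\cos y\sin z$, and $U=\sum_{j=0}^3c_j\sigma_j\otimes\sigma_j$ acting on qubits $A,B$. $U$ is called normalized if $\pi/4\ge x\ge y\ge z\ge0$ and $0<y<\pi/4$. $E(\varphi(\alpha,\beta;\frac{\pi}{2},\frac{\pi}{2}))$ denotes the entanglement entropy $S(\mathrm{Tr}_{AR_A}|\chi\rangle\langle\chi|)$ (von Neumann entropy, base-2 logarithm) of $|\chi\rangle=U\big((\cos\alpha|00\rangle+\sin\alpha|11\rangle)_{AR_A}\otimes(\cos\beta|00\rangle+\sin\beta|11\rangle)_{BR_B}\big)$, with $R_A,R_B$ qubits and $U$ acting on $A,B$. *)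

(* Defs.v *)
From HB Require Import structures.
From mathcomp Require Import all_boot all_order all_algebra.
From mathcomp Require Import all_classical all_reals all_analysis.
From mathcomp.real_closed Require Import complex mxtens.

Set Implicit Arguments.
Unset Strict Implicit.
Unset Printing Implicit Defensive.

Import Order.TTheory GRing.Theory Num.Theory.
Local Open Scope ring_scope.
Local Open Scope complex_scope.

Section Defs.
Variable R : realType.
Local Notation C := R[i].

Definition cconj (w : C) : C := let: a +i* b := w in a -i* b.

Definition pauli (j : 'I_4) : 'M[C]_2 :=
  \matrix_(r < 2, s < 2)
    match val j with
    | 0%N => if r == s then 1 else 0
    | 1%N => if r == s then 0 else 1
    | 2%N => if r == s then 0 else if val r == 0%N then - 'i else 'i
    | _ => if r == s then (if val r == 0%N then 1 else -1) else 0
    end.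

Definition coef_c (x y z : R) (j : 'I_4) : C :=
  match val j with
  | 0%N => (cos x * cos y * cos z) +i* (sin x * sin y * sin z)
  | 1%N => (cos x * sin y * sin z) +i* (sin x * cos y * cos z)
  | 2%N => (sin x * cos y * sin z) +i* (cos x * sin y * cos z)
  | _ => (sin x * sin y * cos z) +i* (cos x * cos y * sin z)
  end.

(* U = sum_j c_j sigma_j (x) sigma_j acting on qubits A,B; index (a,b) <-> mxtens_index (a,b) *)
Definition Uxyz (x y z : R) : 'M[C]_(2 * 2) :=
  \sum_(j < 4) coef_c x y z j *: (pauli j *t pauli j).

Definition normalized (x y z : R) : Prop :=
  pi / 4 >= x /\ x >= y /\ y >= z /\ z >= 0 /\ 0 < y /\ y < pi / 4.

(* coefficient <q r| of cos t |00> + sin t |11> *)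
Definition bell (t : R) (q r : 'I_2) : C :=
  if q == r then (if val q == 0%N then (cos t)%:C else (sin t)%:C) else 0.

(* coefficient <a ra b rb| chi>, chi = (U_AB (x) I_{R_A R_B}) (psi_{A R_A} (x) psi_{B R_B}) *)
Definition chi (x y z al be : R) (a ra b rb : 'I_2) : C :=
  \sum_(a' < 2) \sum_(b' < 2)
     Uxyz x y z (mxtens_index (a, b)) (mxtens_index (a', b'))
     * bell al a' ra * bell be b' rb.

(* reduced state Tr_{A R_A} |chi><chi| on B R_B, index (b,rb) <-> mxtens_index (b,rb) *)
Definition rhoBRB (x y z al be : R) : 'M[C]_(2 * 2) :=
  \matrix_(k, l)
    \sum_(a < 2) \sum_(ra < 2)
      chi x y z al be a ra (mxtens_unindex k).1 (mxtens_unindex k).2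
      * cconj (chi x y z al be a ra (mxtens_unindex l).1 (mxtens_unindex l).2).

Definition log2 (t : R) : R := ln t / ln 2.

(* eigenvalues with multiplicity: a real vector whose entries are the roots of the
   characteristic polynomial (exists for Hermitian matrices; unique up to permutation) *)
Definition real_spectrum n (M : 'M[C]_n) : 'rV[R]_n :=
  xget 0 (fun lam : 'rV[R]_n =>
    char_poly M = \prod_(i < n) ('X - ((lam 0 i)%:C)%:P)).

(* von Neumann entropy, base-2 logarithm (0 log 0 = 0 since ln 0 = 0) *)
Definition vN_entropy n (M : 'M[C]_n) : R :=
  - \sum_(i < n) (real_spectrum M 0 i * log2 (real_spectrum M 0 i)).

Definition Ent (x y z al be : R) : R := vN_entropy (rhoBRB x y z al be).

End Defs.

(* Main.v *)
Require Import Defs.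
From HB Require Import structures.
From mathcomp Require Import all_boot all_order all_algebra.
From mathcomp Require Import all_classical all_reals all_analysis.
From mathcomp.real_closed Require Import complex mxtens.
From mathcomp Require Import ring lra.

Set Implicit Arguments.
Unset Strict Implicit.
Unset Printing Implicit Defensive.
Import Order.TTheory GRing.Theory Num.Theory.
Local Open Scope ring_scope.
Local Open Scope complex_scope.

Ltac normnat f :=
  repeat match goal with
  | |- context [f ?a ?b] =>
      let a' := eval vm_compute in a in
      let b' := eval vm_compute in b in
      progress change (f a b) with (f a' b')
  | |- context [(-1) ^+ ?n] =>
      let n' := eval vm_compute in n in
      progress change ((-1) ^+ n) with ((-1) ^+ n')
  end.

Lemma det4_block (T : comNzRingType) (f : nat -> nat -> T) :
  f 0 1 = 0 -> f 0 2 = 0 -> f 1 0 = 0 -> f 1 3 = 0 ->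
  f 2 0 = 0 -> f 2 3 = 0 -> f 3 1 = 0 -> f 3 2 = 0 ->
  \det (\matrix_(i < 4, j < 4) f i j) =
  (f 0 0 * f 3 3 - f 0 3 * f 3 0) * (f 1 1 * f 2 2 - f 1 2 * f 2 1).
Proof.
move=> h01 h02 h10 h13 h20 h23 h31 h32.
rewrite (expand_det_row _ ord0) !big_ord_recl big_ord0 /cofactor.
rewrite !(expand_det_row _ ord0) !big_ord_recl !big_ord0 /cofactor.
rewrite !(expand_det_row _ ord0) !big_ord_recl !big_ord0 /cofactor.
rewrite !det_mx11 !mxE.
normnat f.
rewrite h01 h02 h10 h13 h20 h23 h31 h32 /=.
rewrite !expr0 !expr1 ?expr2 ?sqrrN ?expr1n. 
rewrite /bump !leq0n /=.
ring.
Qed.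

Section S.
Variable R : realType.
Local Notation C := R[i].

Definition Uf (c0 c1 c2 c3 : C) (a b a' b' : nat) : C :=
  match a, b, a', b' with
  | 0%N, 0%N, 0%N, 0%N => c0 + c3
  | 1%N, 1%N, 1%N, 1%N => c0 + c3
  | 0%N, 0%N, 1%N, 1%N => c1 - c2
  | 1%N, 1%N, 0%N, 0%N => c1 - c2
  | 0%N, 1%N, 0%N, 1%N => c0 - c3
  | 1%N, 0%N, 1%N, 0%N => c0 - c3
  | 0%N, 1%N, 1%N, 0%N => c1 + c2
  | 1%N, 0%N, 0%N, 1%N => c1 + c2
  | _, _, _, _ => 0
  end.

Definition k0 (x y z : R) : C := (cos x * cos y * cos z) +i* (sin x * sin y * sin z).
Definition k1 (x y z : R) : C := (cos x * sin y * sin z) +i* (sin x * cos y * cos z).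
Definition k2 (x y z : R) : C := (sin x * cos y * sin z) +i* (cos x * sin y * cos z).
Definition k3 (x y z : R) : C := (sin x * sin y * cos z) +i* (cos x * cos y * sin z).

Lemma ii : 'i * 'i = -1 :> C.
Proof. by rewrite -expr2 sqr_i. Qed.

Lemma UE x y z (a b a' b' : 'I_2) :
  Uxyz x y z (mxtens_index (a, b)) (mxtens_index (a', b')) =
  Uf (k0 x y z) (k1 x y z) (k2 x y z) (k3 x y z) a b a' b'.
Proof.
rewrite /Uxyz summxE !big_ord_recl big_ord0 !mxE !mxtens_indexK /=.
case: a => [[|[|//]] ?]; case: b => [[|[|//]] ?];
case: a' => [[|[|//]] ?]; case: b' => [[|[|//]] ?] /=.
all: rewrite /Uf /coef_c /= -/(k0 x y z) -/(k1 x y z) -/(k2 x y z) -/(k3 x y z).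
all: rewrite ?mulr0 ?mul0r ?mulr1 ?mul1r ?addr0 ?add0r ?mulNr ?mulrN ?mulrNN ?ii ?mulrN1; ring.
Qed.
Lemma vN_prod n (M : 'M[C]_n) (lam : 'rV[R]_n) :
  char_poly M = \prod_(i < n) ('X - ((lam 0 i)%:C)%:P) ->
  vN_entropy M = - \sum_(i < n) (lam 0 i * log2 (lam 0 i)).
Proof.
move=> HM; rewrite /vN_entropy; set mu := real_spectrum M.
have Hmu : char_poly M = \prod_(i < n) ('X - ((mu 0 i)%:C)%:P).
  by rewrite /mu /real_spectrum; apply: (@xgetPex _ 0 (fun lam : 'rV[R]_n =>
    char_poly M = \prod_(i < n) ('X - ((lam 0 i)%:C)%:P))); exists lam.
have hp : perm_eq [seq mu 0 i | i <- index_enum 'I_n] [seq lam 0 i | i <- index_enum 'I_n].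
  apply: (@perm_map_inj _ _ (real_complex R)); first exact: complexI.
  apply: prod_XsubC_eq; rewrite -!map_comp !big_map.
  by rewrite -Hmu -HM.
congr (- _).
rewrite -(big_map (fun i => mu 0 i) predT (fun t => t * log2 t)).
rewrite -(big_map (fun i => lam 0 i) predT (fun t => t * log2 t)).
by apply: perm_big.
Qed.

Definition cs (n : nat) (t : R) : R := if n == 0%N then cos t else sin t.

Definition chiN x y z al be (a ra b rb : nat) : C :=
  Uf (k0 x y z) (k1 x y z) (k2 x y z) (k3 x y z) a b ra rb * (cs ra al)%:C * (cs rb be)%:C.

Lemma chiE x y z al be a ra b rb :
  chi x y z al be a ra b rb = chiN x y z al be a ra b rb.
Proof.
rewrite /chi !big_ord_recl !big_ord0 !UE /bell /chiN.
case: ra => [[|[|//]] ?]; case: rb => [[|[|//]] ?] /=.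
all: rewrite /cs /bump ?leq0n /= ?mulr0 ?mul0r ?addr0 ?add0r //.
Qed.

Arguments k0 : simpl never.
Arguments k1 : simpl never.
Arguments k2 : simpl never.
Arguments k3 : simpl never.
Arguments cs : simpl never.
Lemma cs0 t : cs 0 t = cos t. Proof. by []. Qed.
Lemma cs1 t : cs 1 t = sin t. Proof. by []. Qed.

Definition rhoN x y z al be (k l : nat) : C :=
  \sum_(a < 2) \sum_(ra < 2) chiN x y z al be a ra (k %/ 2) (k %% 2) *
     cconj (chiN x y z al be a ra (l %/ 2) (l %% 2)).

Lemma rhoE x y z al be (k l : 'I_(2 * 2)) :
  rhoBRB x y z al be k l = rhoN x y z al be k l.
Proof.
rewrite /rhoBRB mxE /rhoN; apply: eq_bigr => a _; apply: eq_bigr => ra _.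
by rewrite !chiE.
Qed.

Lemma cconjE (w : C) : cconj w = w^*%C.
Proof. by case: w. Qed.

Definition nsq_def (w : C) : R := complex.Re w ^+ 2 + complex.Im w ^+ 2.
Fact nsq_key : unit. Proof. by []. Qed.
Definition nsq := locked_with nsq_key nsq_def.

Lemma nsqE (w : C) : (nsq w)%:C = w * w^*%C.
Proof. by case: w => a b; rewrite [nsq]unlock /nsq_def /=; simpc; rewrite !expr2 [b * a]mulrC addNr. Qed.


Ltac normchi :=
  repeat match goal with
  | |- context [chiN ?x ?y ?z ?al ?be ?a ?b ?c ?d] =>
      let a' := eval vm_compute in a in
      let b' := eval vm_compute in b in
      let c' := eval vm_compute in c in
      let d' := eval vm_compute in d in
      progress change (chiN x y z al be a b c d) with (chiN x y z al be a' b' c' d')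
  end.


Lemma rcD (a b : R) : (a + b)%:C = a%:C + b%:C :> C. Proof. exact: rmorphD. Qed.
Lemma rcB (a b : R) : (a - b)%:C = a%:C - b%:C :> C. Proof. exact: rmorphB. Qed.
Lemma rcN (a : R) : (- a)%:C = - a%:C :> C. Proof. exact: rmorphN. Qed.
Lemma rcM (a b : R) : (a * b)%:C = a%:C * b%:C :> C. Proof. exact: rmorphM. Qed.
Lemma rcX2 (a : R) : (a ^+ 2)%:C = a%:C * a%:C :> C. Proof. by rewrite expr2 rcM. Qed.
Lemma cjD (a b : C) : (a + b)^*%C = a^*%C + b^*%C. Proof. exact: rmorphD. Qed.
Lemma cjB (a b : C) : (a - b)^*%C = a^*%C - b^*%C. Proof. exact: rmorphB. Qed.
Lemma cjN (a : C) : (- a)^*%C = - a^*%C. Proof. exact: rmorphN. Qed.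
Lemma cjM (a b : C) : (a * b)^*%C = a^*%C * b^*%C. Proof. exact: rmorphM. Qed.
Lemma cjX2 (a : C) : (a ^+ 2)^*%C = a^*%C * a^*%C. Proof. by rewrite expr2 cjM. Qed.
Lemma cjR (a : R) : (a%:C)^*%C = a%:C :> C. Proof. exact: conjc_real. Qed.
Lemma cj0 : (0 : C)^*%C = 0. Proof. exact: rmorph0. Qed.

Ltac crunch := rewrite /rhoN !big_ord_recl !big_ord0 !cconjE; normchi;
  rewrite /chiN /Uf; cbv beta iota; rewrite ?cs0 ?cs1 ?mul0r ?mulr0 ?add0r ?addr0 ?cj0 ?mul0r ?mulr0 ?add0r ?addr0.

Lemma rho01 x y z al be : rhoN x y z al be 0 1 = 0.
Proof. by crunch. Qed.
Lemma rho02 x y z al be : rhoN x y z al be 0 2 = 0.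
Proof. by crunch. Qed.
Lemma rho10 x y z al be : rhoN x y z al be 1 0 = 0.
Proof. by crunch. Qed.
Lemma rho13 x y z al be : rhoN x y z al be 1 3 = 0.
Proof. by crunch. Qed.
Lemma rho20 x y z al be : rhoN x y z al be 2 0 = 0.
Proof. by crunch. Qed.
Lemma rho23 x y z al be : rhoN x y z al be 2 3 = 0.
Proof. by crunch. Qed.
Lemma rho31 x y z al be : rhoN x y z al be 3 1 = 0.
Proof. by crunch. Qed.
Lemma rho32 x y z al be : rhoN x y z al be 3 2 = 0.
Proof. by crunch. Qed.

Section Blocks.
Variables (x y z al be : R).
Let u := k0 x y z + k3 x y z.
Let w := k0 x y z - k3 x y z.
Let v := k1 x y z - k2 x y z.
Let t := k1 x y z + k2 x y z.
Let ca := cos al. Let sa := sin al. Let cb := cos be. Let sb := sin be.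

Lemma trE : rhoN x y z al be 0 0 + rhoN x y z al be 3 3 =
  (cb ^+ 2 * (ca ^+ 2 * nsq u + sa ^+ 2 * nsq w) + sb ^+ 2 * (ca ^+ 2 * nsq w + sa ^+ 2 * nsq u))%:C.
Proof.
crunch.
rewrite ?nsqE ?(rcD, rcB, rcM, rcX2) ?nsqE ?(cjD, cjB, cjN, cjM, cjX2, cjR) /u /w /ca /sa /cb /sb ?(cjD, cjB, cjN, cjM, cjX2, cjR).
ring.
Qed.

Lemma detE : rhoN x y z al be 0 0 * rhoN x y z al be 3 3 - rhoN x y z al be 0 3 * rhoN x y z al be 3 0 =
  (ca ^+ 2 * sa ^+ 2 * cb ^+ 2 * sb ^+ 2 * nsq (u ^+ 2 - w ^+ 2))%:C.
Proof.
crunch.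
rewrite ?nsqE ?(rcD, rcB, rcM, rcX2) ?nsqE ?(cjD, cjB, cjN, cjM, cjX2, cjR) /u /w /ca /sa /cb /sb ?(cjD, cjB, cjN, cjM, cjX2, cjR).
ring.
Qed.

Lemma troE : rhoN x y z al be 1 1 + rhoN x y z al be 2 2 =
  (sb ^+ 2 * (sa ^+ 2 * nsq v + ca ^+ 2 * nsq t) + cb ^+ 2 * (sa ^+ 2 * nsq t + ca ^+ 2 * nsq v))%:C.
Proof.
crunch.
rewrite ?nsqE ?(rcD, rcB, rcM, rcX2) ?nsqE ?(cjD, cjB, cjN, cjM, cjX2, cjR) /v /t /ca /sa /cb /sb ?(cjD, cjB, cjN, cjM, cjX2, cjR).
ring.
Qed.

Lemma detoE : rhoN x y z al be 1 1 * rhoN x y z al be 2 2 - rhoN x y z al be 1 2 * rhoN x y z al be 2 1 =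
  (ca ^+ 2 * sa ^+ 2 * cb ^+ 2 * sb ^+ 2 * nsq (v ^+ 2 - t ^+ 2))%:C.
Proof.
crunch.
rewrite ?nsqE ?(rcD, rcB, rcM, rcX2) ?nsqE ?(cjD, cjB, cjN, cjM, cjX2, cjR) /v /t /ca /sa /cb /sb ?(cjD, cjB, cjN, cjM, cjX2, cjR).
ring.
Qed.

Lemma GeE (a b : R) : (a * nsq u + b * nsq w) * (a * nsq w + b * nsq u) - a * b * nsq (u ^+ 2 - w ^+ 2)
  = nsq (a%:C * u * w^*%C + b%:C * w * u^*%C).
Proof.
apply: complexI.
rewrite ?nsqE ?(rcD, rcB, rcN, rcM, rcX2) ?nsqE /u /w /v /t ?(cjD, cjB, cjN, cjM, cjX2, cjR) ?conjcK.
ring.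
Qed.

Lemma GoE (a b : R) : (a * nsq v + b * nsq t) * (a * nsq t + b * nsq v) - a * b * nsq (v ^+ 2 - t ^+ 2)
  = nsq (a%:C * v * t^*%C + b%:C * t * v^*%C).
Proof.
apply: complexI.
rewrite ?nsqE ?(rcD, rcB, rcN, rcM, rcX2) ?nsqE /u /w /v /t ?(cjD, cjB, cjN, cjM, cjX2, cjR) ?conjcK.
ring.
Qed.
End Blocks.
End S.
Section S.
Variable R : realType.
Local Notation C := R[i].
Definition gP (x y z al be : R) (i j : nat) : {poly C} :=
  'X *+ (i == j) - (rhoN x y z al be i j)%:P.

Lemma cpE (x y z al be : R) : char_poly (rhoBRB x y z al be) =
  (('X - (rhoN x y z al be 0 0)%:P) * ('X - (rhoN x y z al be 3 3)%:P)
     - (rhoN x y z al be 0 3)%:P * (rhoN x y z al be 3 0)%:P) *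
  (('X - (rhoN x y z al be 1 1)%:P) * ('X - (rhoN x y z al be 2 2)%:P)
     - (rhoN x y z al be 1 2)%:P * (rhoN x y z al be 2 1)%:P).
Proof.
rewrite /char_poly.
have := @rhoE R x y z al be; move: (rhoBRB x y z al be) => M HM.
have -> : char_poly_mx M = \matrix_(i < 4, j < 4) gP x y z al be i j.
  by apply/matrixP => i j; rewrite !mxE HM.
rewrite det4_block /gP /= ?rho01 ?rho02 ?rho10 ?rho13 ?rho20 ?rho23 ?rho31 ?rho32 ?polyC0 ?subr0 //.
ring.
Qed.

Lemma quadE (a b c d : C) : ('X - a%:P) * ('X - b%:P) - c%:P * d%:P =
  'X ^+ 2 - (a + b)%:P * 'X + (a * b - c * d)%:P.
Proof. rewrite !(rmorphD, rmorphB, rmorphM) /=; ring. Qed.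

Definition phi (t : R) := t * log2 t.
Definition ev1 (s D : R) := (s + Num.sqrt (s ^+ 2 - 4 * D)) / 2.
Definition ev2 (s D : R) := (s - Num.sqrt (s ^+ 2 - 4 * D)) / 2.
Definition Hs (s D : R) := phi (ev1 s D) + phi (ev2 s D).

Lemma ev_sum s D : ev1 s D + ev2 s D = s.
Proof. by rewrite /ev1 /ev2; field. Qed.

Lemma ev_prod s D : 0 <= s ^+ 2 - 4 * D -> ev1 s D * ev2 s D = D.
Proof.
move=> h; rewrite /ev1 /ev2; set q := Num.sqrt _.
have e : q ^+ 2 = s ^+ 2 - 4 * D by rewrite sqr_sqrtr.
have -> : (s + q) / 2 * ((s - q) / 2) = (s ^+ 2 - q ^+ 2) / 4 by field.
by rewrite e; field.
Qed.

Lemma quadR (s D : R) : 0 <= s ^+ 2 - 4 * D ->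
  ('X - ((ev1 s D)%:C)%:P) * ('X - ((ev2 s D)%:C)%:P) =
  'X ^+ 2 - (s%:C)%:P * 'X + (D%:C)%:P :> {poly C}.
Proof.
move=> h.
have := quadE (ev1 s D)%:C (ev2 s D)%:C 0 0.
rewrite !polyC0 !mulr0 !subr0 => ->.
by rewrite -rcD -rcM ev_sum ev_prod.
Qed.



Definition TeF (x y z al be : R) :=
  cos be ^+ 2 * (cos al ^+ 2 * nsq (k0 x y z + k3 x y z) + sin al ^+ 2 * nsq (k0 x y z - k3 x y z)) +
  sin be ^+ 2 * (cos al ^+ 2 * nsq (k0 x y z - k3 x y z) + sin al ^+ 2 * nsq (k0 x y z + k3 x y z)).
Definition DeF (x y z al be : R) :=
  cos al ^+ 2 * sin al ^+ 2 * cos be ^+ 2 * sin be ^+ 2 *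
  nsq ((k0 x y z + k3 x y z) ^+ 2 - (k0 x y z - k3 x y z) ^+ 2).
Definition ToF (x y z al be : R) :=
  sin be ^+ 2 * (sin al ^+ 2 * nsq (k1 x y z - k2 x y z) + cos al ^+ 2 * nsq (k1 x y z + k2 x y z)) +
  cos be ^+ 2 * (sin al ^+ 2 * nsq (k1 x y z + k2 x y z) + cos al ^+ 2 * nsq (k1 x y z - k2 x y z)).
Definition DoF (x y z al be : R) :=
  cos al ^+ 2 * sin al ^+ 2 * cos be ^+ 2 * sin be ^+ 2 *
  nsq ((k1 x y z - k2 x y z) ^+ 2 - (k1 x y z + k2 x y z) ^+ 2).

Lemma nsq_ge0 (w : C) : 0 <= nsq w.
Proof. by rewrite /nsq unlock /nsq_def addr_ge0 // sqr_ge0. Qed.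

Lemma disc_gen (A B Ne a b c d : R) : 0 <= c -> 0 <= d ->
  0 <= A * B - a * b * Ne ->
  0 <= (c * A + d * B) ^+ 2 - 4 * (a * b * c * d * Ne).
Proof.
move=> hc hd hG.
have -> : (c * A + d * B) ^+ 2 - 4 * (a * b * c * d * Ne) =
  (c * A - d * B) ^+ 2 + 4 * (c * d) * (A * B - a * b * Ne) by ring.
by apply: addr_ge0; [exact: sqr_ge0 | apply: mulr_ge0 => //; apply: mulr_ge0 => //; apply: mulr_ge0].
Qed.

Lemma discE (x y z al be : R) : 0 <= TeF x y z al be ^+ 2 - 4 * DeF x y z al be.
Proof.
rewrite /TeF /DeF; apply: disc_gen; [exact: sqr_ge0 | exact: sqr_ge0 |].
by rewrite GeE nsq_ge0.
Qed.

Lemma discO (x y z al be : R) : 0 <= ToF x y z al be ^+ 2 - 4 * DoF x y z al be.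
Proof.
have -> : DoF x y z al be = sin al ^+ 2 * cos al ^+ 2 * sin be ^+ 2 * cos be ^+ 2 *
  nsq ((k1 x y z - k2 x y z) ^+ 2 - (k1 x y z + k2 x y z) ^+ 2) by rewrite /DoF; ring.
rewrite /ToF; apply: disc_gen; [exact: sqr_ge0 | exact: sqr_ge0 |].
by rewrite GoE nsq_ge0.
Qed.

Lemma EntE (x y z al be : R) : Ent x y z al be =
  - (Hs (TeF x y z al be) (DeF x y z al be) + Hs (ToF x y z al be) (DoF x y z al be)).
Proof.
rewrite /Ent (@vN_prod _ _ _ (\row_(i < 4) nth 0 [:: ev1 (TeF x y z al be) (DeF x y z al be);
   ev2 (TeF x y z al be) (DeF x y z al be); ev1 (ToF x y z al be) (DoF x y z al be);
   ev2 (ToF x y z al be) (DoF x y z al be)] i)).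
  rewrite !big_ord_recl big_ord0 !mxE /= addr0 /Hs /phi; ring.
rewrite cpE !quadE trE detE troE detoE -/(TeF x y z al be) -/(DeF x y z al be).
rewrite -/(ToF x y z al be) -/(DoF x y z al be).
rewrite -(quadR (discE x y z al be)) -(quadR (discO x y z al be)).
rewrite !big_ord_recl big_ord0 !mxE /= mulr1 !mulrA //.
Qed.

End S.
Section S.
Variable R : realType.

Lemma gibbs (u m : R) : 0 <= u -> 0 < m -> u * ln m + u - m <= u * ln u.
Proof.
move=> hu hm; have [->|upos] := eqVneq u 0.
  by rewrite !mul0r add0r sub0r oppr_le0 ltW.
have hu' : 0 < u by rewrite lt_def upos hu.
have h1 : ln (m / u) <= m / u - 1.
  have := @le_ln1Dx R (m / u - 1); rewrite (_ : 1 + (m / u - 1) = m / u); last by ring.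
  apply.
  have : 0 < m / u by rewrite divr_gt0. lra.
rewrite ln_div ?posrE // in h1.
have h2 : u * (ln m - ln u) <= u * (m / u - 1) by rewrite ler_wpM2l // ltW.
have e : u * (m / u - 1) = m - u by field; rewrite gt_eqF.
rewrite e in h2; lra.
Qed.

Definition L (t : R) := t * ln t.

Lemma pairL (a b a' b' : R) : 0 <= a -> 0 <= b -> 0 <= a' -> 0 <= b' ->
  a + b = a' + b' -> a * b <= a' * b' -> L a' + L b' <= L a + L b.
Proof.
move=> ha hb ha' hb' hs hp.
have [a'0|a'n] := eqVneq a' 0.
  have hab : a * b = 0 by apply/le_anti; rewrite mulr_ge0 // andbT; move: hp; rewrite a'0 mul0r.
  move/eqP: hab; rewrite mulf_eq0 => /orP[/eqP a0|/eqP b0].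
    have -> : b' = b by move: hs; rewrite a0 a'0 !add0r.
    by rewrite a0 a'0.
  have -> : b' = a by move: hs; rewrite b0 a'0 addr0 add0r.
  by rewrite b0 a'0 addrC.
have [b'0|b'n] := eqVneq b' 0.
  have hab : a * b = 0 by apply/le_anti; rewrite mulr_ge0 // andbT; move: hp; rewrite b'0 mulr0.
  move/eqP: hab; rewrite mulf_eq0 => /orP[/eqP a0|/eqP b0].
    have -> : a' = b by move: hs; rewrite a0 b'0 addr0 add0r.
    by rewrite a0 b'0 addrC.
  have -> : a' = a by move: hs; rewrite b0 b'0 !addr0.
  by rewrite b0 b'0.
have pa' : 0 < a' by rewrite lt_def a'n ha'.
have pb' : 0 < b' by rewrite lt_def b'n hb'.
have hbet : (a' - a) * (a' - b) <= 0.
  have -> : (a' - a) * (a' - b) = a * b - a' * b'.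
    have -> : b' = a + b - a' by lra.
    ring.
  by rewrite subr_le0.
have [eab|nab] := eqVneq a b.
  have h2 : (a' - a) ^+ 2 <= 0 by rewrite expr2 {2}eab.
  have ea : a' = a.
    apply/eqP; rewrite -subr_eq0 -sqrf_eq0; apply/eqP/le_anti; rewrite h2 sqr_ge0 //.
  have eb : b' = b by lra.
  by rewrite ea eb.
have nab' : a - b != 0 by rewrite subr_eq0.
set t := (a' - b) / (a - b).
have ea : a' = t * a + (1 - t) * b by rewrite /t; field.
have eb : b' = (1 - t) * a + t * b.
  have -> : b' = a + b - a' by lra.
  rewrite ea; ring.
have htt : 0 <= t * (1 - t).
  have -> : t * (1 - t) = - ((a' - a) * (a' - b)) / (a - b) ^+ 2 by rewrite /t; field.
  by apply: divr_ge0; [rewrite oppr_ge0 | exact: sqr_ge0].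
have ht0 : 0 <= t by nra.
have ht1 : 0 <= 1 - t by nra.
have g1 := gibbs ha pa'. have g2 := gibbs ha pb'.
have g3 := gibbs hb pa'. have g4 := gibbs hb pb'.
have m1 := ler_wpM2l ht0 g1. have m2 := ler_wpM2l ht1 g2.
have m3 := ler_wpM2l ht1 g3. have m4 := ler_wpM2l ht0 g4.
rewrite /L; set la := ln a'; set lb := ln b'.
rewrite -/la -/lb in m1 m2 m3 m4.
have e1 : a' * la = t * (a * la) + (1 - t) * (b * la) by rewrite {1}ea; ring.
have e2 : b' * lb = (1 - t) * (a * lb) + t * (b * lb) by rewrite {1}eb; ring.
rewrite e1 e2.
lra.
Qed.

Lemma ln2_gt0 : 0 < ln (2 : R).
Proof. by apply: ln_gt0; rewrite ltr1n. Qed.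

Lemma phiL (t : R) : phi t = L t / ln 2.
Proof. by rewrite /phi /L /log2 mulrA. Qed.

Lemma pairP (a b a' b' : R) : 0 <= a -> 0 <= b -> 0 <= a' -> 0 <= b' ->
  a + b = a' + b' -> a * b <= a' * b' -> phi a' + phi b' <= phi a + phi b.
Proof.
move=> ha hb ha' hb' hs hp; rewrite !phiL -!mulrDl ler_pM2r ?invr_gt0 ?ln2_gt0 //.
exact: pairL.
Qed.

Lemma ev1_ge0 (s D : R) : 0 <= s -> 0 <= ev1 s D.
Proof. by move=> hs; rewrite /ev1 divr_ge0 // addr_ge0 // sqrtr_ge0. Qed.

Lemma ev2_ge0 (s D : R) : 0 <= s -> 0 <= D -> 0 <= ev2 s D.
Proof.
move=> hs hD; rewrite /ev2 divr_ge0 // subr_ge0.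
rewrite -[X in _ <= X](@ger0_norm _ s) // -sqrtr_sqr ler_sqrt ?sqr_ge0 //.
by rewrite lerBlDr lerDl mulr_ge0.
Qed.

Lemma Hs_le (s D D' : R) : 0 <= s -> 0 <= D -> D <= D' -> 0 <= s ^+ 2 - 4 * D' ->
  Hs s D' <= Hs s D.
Proof.
move=> hs hD hDD hd'.
have hd : 0 <= s ^+ 2 - 4 * D by apply: (le_trans hd'); rewrite lerD2l lerN2 ler_wpM2l.
rewrite /Hs; apply: pairP.
- exact: ev1_ge0.
- exact: ev2_ge0.
- exact: ev1_ge0.
- apply: ev2_ge0 => //; exact: le_trans hDD.
- by rewrite !ev_sum.
- by rewrite !ev_prod.
Qed.

Lemma Hs0 (s : R) : 0 <= s -> Hs s 0 = phi s.
Proof.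
move=> hs; rewrite /Hs /ev1 /ev2 mulr0 subr0 sqrtr_sqr ger0_norm //.
rewrite subrr mul0r /phi mul0r addr0.
have -> : (s + s) / 2 = s by field.
done.
Qed.

Lemma phi_half : phi (1 / 2) = - (1 / 2) :> R.
Proof.
rewrite /phi /log2 div1r lnV ?posrE //.
by rewrite mulNr divff ?mulrN1 // gt_eqF // ln2_gt0.
Qed.

Lemma bin_le1 (p : R) : 0 <= p <= 1 -> - (phi p + phi (1 - p)) <= 1.
Proof.
case/andP => h0 h1.
have h2 : 0 <= 1 / 2 :> R by rewrite divr_ge0.
have h1p : 0 <= 1 - p by rewrite subr_ge0.
have := @pairP p (1 - p) (1 / 2) (1 / 2) h0 h1p h2 h2.
rewrite phi_half.
have hp : p * (1 - p) <= 1 / 2 * (1 / 2).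
  rewrite -subr_ge0.
  have -> : 1 / 2 * (1 / 2) - p * (1 - p) = (p - 1 / 2) ^+ 2 :> R by field.
  exact: sqr_ge0.
have hs : p + (1 - p) = 1 / 2 + 1 / 2 by field.
move/(_ hs hp) => h.
have e : - (1 / 2) - 1 / 2 = -1 :> R by field.
by rewrite e in h; rewrite lerNl.
Qed.
End S.
Section S.
Variable R : realType.

Lemma PuE (x y z : R) : nsq (k0 x y z + k3 x y z) = (cos x * cos y + sin x * sin y) ^+ 2.
Proof.
rewrite /nsq unlock /nsq_def /k0 /k3 /=.
rewrite -[RHS]mulr1 -(cos2Dsin2 z); ring.
Qed.
Lemma PwE (x y z : R) : nsq (k0 x y z - k3 x y z) = (cos x * cos y - sin x * sin y) ^+ 2.
Proof.
rewrite /nsq unlock /nsq_def /k0 /k3 /=.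
rewrite -[RHS]mulr1 -(cos2Dsin2 z); ring.
Qed.
Lemma PvE (x y z : R) : nsq (k1 x y z - k2 x y z) = (cos x * sin y - sin x * cos y) ^+ 2.
Proof.
rewrite /nsq unlock /nsq_def /k1 /k2 /=.
rewrite -[RHS]mulr1 -(cos2Dsin2 z); ring.
Qed.
Lemma PtE (x y z : R) : nsq (k1 x y z + k2 x y z) = (sin x * cos y + cos x * sin y) ^+ 2.
Proof.
rewrite /nsq unlock /nsq_def /k1 /k2 /=.
rewrite -[RHS]mulr1 -(cos2Dsin2 z); ring.
Qed.

Lemma pyth (a b : R) : cos a ^+ 2 + sin a ^+ 2 = 1 -> cos b ^+ 2 + sin b ^+ 2 = 1 -> True.
Proof. by []. Qed.

Lemma PuPv (x y z : R) : nsq (k0 x y z + k3 x y z) + nsq (k1 x y z - k2 x y z) = 1.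
Proof.
rewrite PuE PvE.
transitivity ((cos x ^+ 2 + sin x ^+ 2) * (cos y ^+ 2 + sin y ^+ 2)); first ring.
by rewrite !cos2Dsin2 mulr1.
Qed.

Lemma PwPt (x y z : R) : nsq (k0 x y z - k3 x y z) + nsq (k1 x y z + k2 x y z) = 1.
Proof.
rewrite PwE PtE.
transitivity ((cos x ^+ 2 + sin x ^+ 2) * (cos y ^+ 2 + sin y ^+ 2)); first ring.
by rewrite !cos2Dsin2 mulr1.
Qed.

Lemma cos2W (x y z : R) : cos (2 * x + 2 * y) = 2 * nsq (k0 x y z - k3 x y z) - 1.
Proof.
rewrite PwE (_ : 2 * x + 2 * y = (x + y) + (x + y)); last by ring.
rewrite cosD.
have h := cos2Dsin2 (x + y).
rewrite cosD sinD in h *.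
rewrite -[X in _ = _ - X]h; ring.
Qed.

Lemma cos2U (x y z : R) : cos (2 * x - 2 * y) = 2 * nsq (k0 x y z + k3 x y z) - 1.
Proof.
rewrite PuE (_ : 2 * x - 2 * y = (x - y) + (x - y)); last by ring.
rewrite cosD.
have h := cos2Dsin2 (x - y).
rewrite cosB sinB in h *.
rewrite -[X in _ = _ - X]h; ring.
Qed.

Lemma cos_pihalfB (t : R) : cos (pi / 2 - t) = sin t.
Proof. by rewrite -opprB cosN cosBpihalf. Qed.
Lemma sin_pihalfB (t : R) : sin (pi / 2 - t) = cos t.
Proof. by rewrite -opprB sinN sinBpihalf opprK. Qed.

Lemma Ent_sym (x y z al be : R) : Ent x y z (pi / 2 - al) (pi / 2 - be) = Ent x y z al be.
Proof.
rewrite !EntE /TeF /DeF /ToF /DoF !cos_pihalfB !sin_pihalfB.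
congr (- (Hs _ _ + Hs _ _)); ring.
Qed.

Lemma Ent_swap (x y z al be : R) : Ent x y z al be = Ent x y z be al.
Proof.
rewrite !EntE /TeF /DeF /ToF /DoF.
congr (- (Hs _ _ + Hs _ _)); ring.
Qed.

Lemma nsq_le1 (x y z : R) : nsq (k0 x y z + k3 x y z) <= 1 /\ nsq (k0 x y z - k3 x y z) <= 1.
Proof.
split.
  by rewrite -(PuPv x y z) lerDl nsq_ge0.
by rewrite -(PwPt x y z) lerDl nsq_ge0.
Qed.

Lemma Ent_a0 (x y z be : R) :
  Ent x y z 0 be = - (phi (cos be ^+ 2 * nsq (k0 x y z + k3 x y z) + sin be ^+ 2 * nsq (k0 x y z - k3 x y z))
     + phi (1 - (cos be ^+ 2 * nsq (k0 x y z + k3 x y z) + sin be ^+ 2 * nsq (k0 x y z - k3 x y z)))).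
Proof.
rewrite EntE /TeF /DeF /ToF /DoF cos0 sin0 expr1n expr0n /= !(mul0r, mulr0, mul1r, addr0, add0r).
have hU := nsq_ge0 (k0 x y z + k3 x y z).
have hW := nsq_ge0 (k0 x y z - k3 x y z).
have hV := nsq_ge0 (k1 x y z - k2 x y z).
have hT := nsq_ge0 (k1 x y z + k2 x y z).
rewrite !Hs0; first last.
- by rewrite addr_ge0 // mulr_ge0 // sqr_ge0.
- by rewrite addr_ge0 // mulr_ge0 // sqr_ge0.
congr (- (phi _ + phi _)).
have e1 := PuPv x y z; have e2 := PwPt x y z; have e3 := cos2Dsin2 be.
have -> : nsq (k1 x y z + k2 x y z) = 1 - nsq (k0 x y z - k3 x y z) by lra.
have -> : nsq (k1 x y z - k2 x y z) = 1 - nsq (k0 x y z + k3 x y z) by lra.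
have -> : sin be ^+ 2 = 1 - cos be ^+ 2 by lra.
ring.
Qed.

Lemma cs4 : cos (pi / 4) ^+ 2 = 2^-1 :> R /\ sin (pi / 4) ^+ 2 = 2^-1 :> R.
Proof.
have e : cos (pi / 4) = sin (pi / 4) :> R.
  by rewrite -cos_pihalfB; congr cos; field.
have h := cos2Dsin2 (pi / 4 : R); rewrite -e in h.
have c2 : cos (pi / 4) ^+ 2 = 2^-1 :> R.
  lra.
by split; rewrite -?e.
Qed.

Lemma TeF4 (x y z be : R) : TeF x y z (pi / 4) be =
  (nsq (k0 x y z + k3 x y z) + nsq (k0 x y z - k3 x y z)) / 2.
Proof.
rewrite /TeF (proj1 cs4) (proj2 cs4).
transitivity ((cos be ^+ 2 + sin be ^+ 2) * ((nsq (k0 x y z + k3 x y z) + nsq (k0 x y z - k3 x y z)) / 2)).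
  by field.
by rewrite cos2Dsin2 mul1r.
Qed.

Lemma ToF4 (x y z be : R) : ToF x y z (pi / 4) be =
  (nsq (k1 x y z - k2 x y z) + nsq (k1 x y z + k2 x y z)) / 2.
Proof.
rewrite /ToF (proj1 cs4) (proj2 cs4).
transitivity ((cos be ^+ 2 + sin be ^+ 2) * ((nsq (k1 x y z - k2 x y z) + nsq (k1 x y z + k2 x y z)) / 2)).
  by field.
by rewrite cos2Dsin2 mul1r.
Qed.

Lemma cs_prod_le (be : R) : cos be ^+ 2 * sin be ^+ 2 <= 4^-1.
Proof.
have h := cos2Dsin2 be.
have : 0 <= (cos be ^+ 2 - sin be ^+ 2) ^+ 2 by exact: sqr_ge0.
have -> : (cos be ^+ 2 - sin be ^+ 2) ^+ 2 = (cos be ^+ 2 + sin be ^+ 2) ^+ 2 - 4 * (cos be ^+ 2 * sin be ^+ 2) by ring.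
rewrite h expr1n subr_ge0 => H.
rewrite -(ler_pM2l (_ : 0 < 4)) ?ltr0n // mulrV ?unitfE ?pnatr_eq0 //.
Qed.

Lemma p4_ge0 (a b c d N : R) : 0 <= N -> 0 <= a ^+ 2 * b ^+ 2 * c ^+ 2 * d ^+ 2 * N.
Proof.
move=> hN; apply: mulr_ge0 hN; apply: mulr_ge0 (sqr_ge0 _).
apply: mulr_ge0 (sqr_ge0 _); apply: mulr_ge0; exact: sqr_ge0.
Qed.
Lemma q_ge0 (c d e f P Q : R) : 0 <= P -> 0 <= Q ->
  0 <= c ^+ 2 * (d ^+ 2 * P + e ^+ 2 * Q) + f ^+ 2 * (d ^+ 2 * Q + e ^+ 2 * P).
Proof.
move=> hP hQ.
by apply: addr_ge0; apply: mulr_ge0 (sqr_ge0 _) _; apply: addr_ge0; apply: mulr_ge0 (sqr_ge0 _) _.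
Qed.
Lemma DeF_ge0 (x y z al be : R) : 0 <= DeF x y z al be.
Proof. exact/p4_ge0/nsq_ge0. Qed.
Lemma DoF_ge0 (x y z al be : R) : 0 <= DoF x y z al be.
Proof. exact/p4_ge0/nsq_ge0. Qed.
Lemma TeF_ge0 (x y z al be : R) : 0 <= TeF x y z al be.
Proof. exact/q_ge0/nsq_ge0/nsq_ge0. Qed.
Lemma ToF_ge0 (x y z al be : R) : 0 <= ToF x y z al be.
Proof. exact/q_ge0/nsq_ge0/nsq_ge0. Qed.

Lemma L4 (x y z be : R) : Ent x y z (pi / 4) be <= Ent x y z (pi / 4) (pi / 4).
Proof.
rewrite !EntE lerN2.
have hD : forall N : R, 0 <= N -> forall b,
    cos (pi / 4) ^+ 2 * sin (pi / 4) ^+ 2 * cos b ^+ 2 * sin b ^+ 2 * N <=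
    cos (pi / 4) ^+ 2 * sin (pi / 4) ^+ 2 * cos (pi / 4) ^+ 2 * sin (pi / 4) ^+ 2 * N.
  move=> N hN b; rewrite (proj1 cs4) (proj2 cs4).
  have h := ler_wpM2r hN (cs_prod_le b).
  have -> : 2^-1 * 2^-1 * cos b ^+ 2 * sin b ^+ 2 * N = 4^-1 * (cos b ^+ 2 * sin b ^+ 2 * N) :> R by field.
  have -> : 2^-1 * 2^-1 * 2^-1 * 2^-1 * N = 4^-1 * (4^-1 * N) :> R by field.
  by rewrite ler_wpM2l // invr_ge0.
apply: lerD.
- rewrite (TeF4 x y z be) -(TeF4 x y z (pi / 4)).
  apply: Hs_le.
  + exact: TeF_ge0.
  + exact: DeF_ge0.
  + by rewrite /DeF; apply: hD; exact: nsq_ge0.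
  + exact: discE.
- rewrite (ToF4 x y z be) -(ToF4 x y z (pi / 4)).
  apply: Hs_le.
  + exact: ToF_ge0.
  + exact: DoF_ge0.
  + by rewrite /DoF; apply: hD; exact: nsq_ge0.
  + exact: discO.
Qed.

Lemma L0 (x y z be : R) : Ent x y z 0 be <= 1.
Proof.
rewrite Ent_a0; apply: bin_le1.
have [hU1 hW1] := nsq_le1 x y z.
have hU := nsq_ge0 (k0 x y z + k3 x y z).
have hW := nsq_ge0 (k0 x y z - k3 x y z).
have hc := sqr_ge0 (cos be); have hs := sqr_ge0 (sin be); have e := cos2Dsin2 be.
apply/andP; split; first by rewrite addr_ge0 // mulr_ge0.
nra.
Qed.

Lemma Ent0_pihalf (x y z : R) : Ent x y z 0 (pi / 2) =
  - (phi (nsq (k0 x y z - k3 x y z)) + phi (1 - nsq (k0 x y z - k3 x y z))).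
Proof. by rewrite Ent_a0 cos_pihalf sin_pihalf expr0n expr1n /= mul0r mul1r add0r. Qed.

Lemma L0' (x y z be : R) :
  nsq (k0 x y z - k3 x y z) <= nsq (k0 x y z + k3 x y z) ->
  2^-1 < nsq (k0 x y z - k3 x y z) ->
  Ent x y z 0 be <= Ent x y z 0 (pi / 2).
Proof.
move=> hUW hW2.
rewrite Ent_a0 Ent0_pihalf lerN2.
have [hU1 hW1] := nsq_le1 x y z.
set U := nsq (k0 x y z + k3 x y z) in hUW hU1 *.
set W := nsq (k0 x y z - k3 x y z) in hUW hW1 hW2 *.
have hc := sqr_ge0 (cos be); have hs := sqr_ge0 (sin be); have e := cos2Dsin2 be.
set c := cos be ^+ 2 in hc e *. set d := sin be ^+ 2 in hs e *.
have hd : d = 1 - c by lra.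
rewrite hd.
have hp : W <= c * U + (1 - c) * W by nra.
have hp1 : c * U + (1 - c) * W <= 1 by nra.
apply: pairP; try lra.
nra.
Qed.

Lemma cos_lt0_gt_pihalf (t : R) : pi / 2 < t <= pi -> cos t < 0.
Proof.
case/andP => h1 h2.
have -> : t = (t - pi / 2) + pi / 2 by ring.
rewrite cosDpihalf oppr_lt0; apply: sin_gt0_pi.
apply/andP; split; first by rewrite subr_gt0.
have : 0 < pi / 2 :> R by rewrite divr_gt0 // pi_gt0.
lra.
Qed.

Lemma attain1 (x y z : R) :
  nsq (k0 x y z - k3 x y z) <= 2^-1 -> 2^-1 <= nsq (k0 x y z + k3 x y z) ->
  nsq (k0 x y z - k3 x y z) < nsq (k0 x y z + k3 x y z) ->
  exists be, (0 <= be <= pi / 2) /\ Ent x y z 0 be = 1.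
Proof.
set U := nsq (k0 x y z + k3 x y z); set W := nsq (k0 x y z - k3 x y z) => hW hU hUW.
set ka := (2^-1 - W) / (U - W).
have hUW' : 0 < U - W by rewrite subr_gt0.
have hk0 : 0 <= ka by rewrite /ka divr_ge0 // ?subr_ge0 // ltW.
have hk1 : ka <= 1 by rewrite /ka ler_pdivrMr // mul1r lerD2r.
have hsq0 : 0 <= Num.sqrt ka := sqrtr_ge0 ka.
have hsq1 : Num.sqrt ka <= 1 by rewrite -sqrtr1 ler_wsqrtr.
have hin : Num.sqrt ka \in `[(-1), 1].
  by rewrite in_itv /=; apply/andP; split => //; apply: le_trans hsq0; rewrite lerN10.
exists (acos (Num.sqrt ka)).
have hcos : cos (acos (Num.sqrt ka)) = Num.sqrt ka by rewrite acosK.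
have hrange : -1 <= Num.sqrt ka <= 1 by move: hin; rewrite in_itv.
split.
  apply/andP; split; first exact: acos_ge0.
  rewrite leNgt; apply/negP => hgt.
  have := @cos_lt0_gt_pihalf (acos (Num.sqrt ka)).
  by rewrite hgt acos_lepi //= hcos ltNge hsq0 => /(_ isT).
rewrite Ent_a0.
have hc2 : cos (acos (Num.sqrt ka)) ^+ 2 = ka by rewrite hcos sqr_sqrtr.
have hs2 : sin (acos (Num.sqrt ka)) ^+ 2 = 1 - ka.
  by have := cos2Dsin2 (acos (Num.sqrt ka)); rewrite hc2; lra.
rewrite hc2 hs2.
have -> : ka * U + (1 - ka) * W = 1 / 2.
  by rewrite /ka; field; rewrite subr_eq0 gt_eqF.
have -> : 1 - 1 / 2 = 1 / 2 :> R by field.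
by rewrite phi_half; field.
Qed.
End S.

Unset Implicit Arguments.
Close Scope complex_scope.
Local Open Scope classical_set_scope.

Lemma sup_max (R : realType) (A : set R) (m : R) : A m -> (forall y, A y -> y <= m) -> sup A = m.
Proof.
move=> Am ub; apply/le_anti/andP; split.
  by apply: ge_sup; [exists m | move=> y /ub].
have hub : has_ubound A by exists m => y /ub.
exact: (ub_le_sup hub).
Qed.

Theorem lemma4 (R : realType) (x y z : R) :
  normalized x y z -> coef_c x y z 2 = coef_c x y z 3 ->
  let E := Ent x y z in
  (sup [set E p.1 p.2 | p in [set p : R * R | 0 <= p.1 <= pi / 2 /\ 0 <= p.2 <= pi / 2]]
     = sup [set E p.1 p.2 | p in [set p : R * R | 0 <= p.1 <= pi / 4 /\ 0 <= p.2 <= pi / 2]]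
   /\
   sup [set E p.1 p.2 | p in [set p : R * R | 0 <= p.1 <= pi / 2 /\ 0 <= p.2 <= pi / 2]]
     = sup [set E p.1 p.2 | p in [set p : R * R | 0 <= p.1 <= pi / 2 /\ 0 <= p.2 <= pi / 4]])
  /\
  sup [set E p.1 p.2 | p in [set p : R * R | (0 <= p.1 <= pi / 4 /\ 0 <= p.2 <= pi / 2) /\
                                             (p.1 = 0 \/ p.1 = pi / 4 \/ p.2 = 0 \/ p.2 = pi / 4)]]
    = (if cos (2 * x + 2 * y) <= 0 then Num.max 1 (E (pi / 4) (pi / 4))
       else Num.max (E 0 (pi / 2)) (E (pi / 4) (pi / 4))).
Proof.
move=> [hx4 [hxy [hyz [hz0 [hy0 hy4]]]]] _ E.
have hpi : 0 < pi :> R := pi_gt0 R.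
split.
  split; congr sup; apply/seteqP; split => _ [p hp <-].
  - have [h|h] := leP p.1 (pi / 4).
      by exists p => //=; move: hp => /= [/andP[? ?] ?]; split => //; apply/andP; split.
    exists (pi / 2 - p.1, pi / 2 - p.2); last by rewrite /E /= Ent_sym.
    move: hp => /= [/andP[h1 h2] /andP[h3 h4]]; split; apply/andP; split; lra.
  - exists p => //=; move: hp => /= [/andP[h1 h2] h3]; split => //; apply/andP; split; lra.
  - have [h|h] := leP p.2 (pi / 4).
      by exists p => //=; move: hp => /= [? /andP[? ?]]; split => //; apply/andP; split.
    exists (pi / 2 - p.1, pi / 2 - p.2); last by rewrite /E /= Ent_sym.
    move: hp => /= [/andP[h1 h2] /andP[h3 h4]]; split; apply/andP; split; lra.
  - exists p => //=; move: hp => /= [h3 /andP[h1 h2]]; split => //; apply/andP; split; lra.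
set U := nsq (k0 x y z + k3 x y z).
set W := nsq (k0 x y z - k3 x y z).
have hx0 : 0 < x by lra.
have hpi2 : pi / 4 < pi / 2 :> R.
  by rewrite ltr_pM2l // ltf_pV2 ?posrE // ltr_nat.
have cx : 0 < cos x by apply: cos_gt0_pihalf; apply/andP; split; lra.
have cy : 0 < cos y by apply: cos_gt0_pihalf; apply/andP; split; lra.
have sx : 0 < sin x by apply: sin_gt0_pihalf; apply/andP; split; lra.
have sy : 0 < sin y by apply: sin_gt0_pihalf; apply/andP; split; lra.
have hUW : W < U.
  rewrite /U /W PuE PwE -subr_gt0.
  have -> : (cos x * cos y + sin x * sin y) ^+ 2 - (cos x * cos y - sin x * sin y) ^+ 2 =
     4 * (cos x * cos y) * (sin x * sin y) by ring.
  by rewrite !mulr_gt0.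
have hU2 : 2^-1 <= U.
  have := cos2U x y z; rewrite -/U => e.
  have : 0 <= cos (2 * x - 2 * y) by apply: cos_ge0_pihalf; apply/andP; split; lra.
  rewrite e; lra.
have hcW := cos2W x y z; rewrite -/W in hcW.
have m44 : [set E p.1 p.2 | p in [set p : R * R | (0 <= p.1 <= pi / 4 /\ 0 <= p.2 <= pi / 2) /\
     (p.1 = 0 \/ p.1 = pi / 4 \/ p.2 = 0 \/ p.2 = pi / 4)]] (E (pi / 4) (pi / 4)).
  exists (pi / 4, pi / 4) => //=; split; [split; apply/andP; split; lra | by right; left].
have hB : forall b0, (forall be, E 0 be <= b0) -> forall p : R * R,
    (0 <= p.1 <= pi / 4 /\ 0 <= p.2 <= pi / 2) /\
    (p.1 = 0 \/ p.1 = pi / 4 \/ p.2 = 0 \/ p.2 = pi / 4) ->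
    E p.1 p.2 <= Num.max b0 (E (pi / 4) (pi / 4)).
  move=> b0 hb0 p [_ [h|[h|[h|h]]]]; rewrite le_max.
  - by rewrite h hb0.
  - by rewrite h L4 orbT.
  - by rewrite /E h Ent_swap hb0.
  - by rewrite /E h Ent_swap L4 orbT.
have [hc|hc] := boolP (cos (2 * x + 2 * y) <= 0).
- apply: sup_max; last first.
    move=> _ [p hp <-]; apply: hB hp => be; exact: L0.
  rewrite /Order.max; case: ifP => h.
    exact: m44.
  have hW12 : W <= 2^-1 by lra.
  have [be [hbe hE]] := attain1 hW12 hU2 hUW.
  case/andP: hbe => hb1 hb2.
  exists (0, be).
    split; last by left.
    split; apply/andP; split => //=; by rewrite divr_ge0 // ltW.
  exact: hE.
-
  have hW2 : 2^-1 < W by move: hc; rewrite -ltNge hcW; lra.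
  apply: sup_max; last first.
    move=> _ [p hp <-]; apply: hB hp => be; apply: L0'; [exact: ltW | exact: hW2].
  rewrite /Order.max; case: ifP => h.
    exact: m44.
  exists (0, pi / 2).
    split; last by left.
    split; apply/andP; split => //=; by rewrite ?lexx ?divr_ge0 // ltW.
  reflexivity.
Qed.
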